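(* Let $0<L,W<\infty$, $\tau=iW/L$, $N\in\mathbb{N}$, and $R_N\in\{A_{N-1},B_N,B_N^\vee,C_N,C_N^\vee,BC_N,D_N\}$. Define for $\mathbf{z}=(z_1,\dots,z_N)\in\mathbb{C}^N$, $z_j=x_j+iy_j$, $$Q^{A_{N-1}}(\mathbf{z})=\exp\Big(-\frac{2\pi\mathcal{N}}{LW}\sum_{j=1}^Ny_j^2\Big)\Big|\vartheta_{s(N)}\Big(\sum_{k=1}^N\frac{z_k}{L};\tau\Big)\Big|^2\big|W^{A_{N-1}}(\mathbf{z}/L;\tau)\big|^2,$$ and for the other six types $Q^{R_N}(\mathbf{z})=\exp(-\frac{2\pi\mathcal{N}}{LW}\sum_j y_j^2)|W^{R_N}(\mathbf{z}/L;\tau)|^2$. Then $Q^{R_N}$ is doubly periodic with periods $(L,iW)$ in each variable: for every $m=1,\dots,N$, $Q^{R_N}(\sigma_m(L)\mathbf{z})=Q^{R_N}(\mathbf{z})$ and $Q^{R_N}(\sigma_m(iW)\mathbf{z})=Q^{R_N}(\mathbf{z})$.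
   Context: Jacobi theta functions: for $v\in\mathbb{C}$, $\Im\tau>0$, $q_0=e^{\pi i\tau}$: $\vartheta_0(v;\tau)=\sum_{n\in\mathbb{Z}}(-1)^nq_0^{n^2}e^{2\pi inv}$, $\vartheta_1(v;\tau)=i\sum_{n}(-1)^nq_0^{(n-1/2)^2}e^{(2n-1)\pi iv}$, $\vartheta_2(v;\tau)=\sum_nq_0^{(n-1/2)^2}e^{(2n-1)\pi iv}$, $\vartheta_3(v;\tau)=\sum_nq_0^{n^2}e^{2\pi inv}$. $\mathcal{N}=\mathcal{N}^{R_N}$ is: $N$ for $A_{N-1}$; $2N-1$ for $B_N$; $2N$ for $B_N^\vee,C_N^\vee$; $2(N+1)$ for $C_N$; $2N+1$ for $BC_N$; $2(N-1)$ for $D_N$. $s(N)=0$ for $N$ even, $3$ for $N$ odd. Macdonald denominators, with $P(\boldsymbol\xi)=\prod_{1\le j<k\le N}\vartheta_1(\xi_k-\xi_j;\tau)\vartheta_1(\xi_k+\xi_j;\tau)$: $W^{A_{N-1}}(\boldsymbol\xi;\tau)=\prod_{j<k}\vartheta_1(\xi_k-\xi_j;\tau)$; $W^{B_N}=\prod_\ell\vartheta_1(\xi_\ell;\tau)P$; $W^{B_N^\vee}=\prod_\ell\vartheta_1(2\xi_\ell;2\tau)P$; $W^{C_N}=\prod_\ell\vartheta_1(2\xi_\ell;\tau)P$; $W^{C_N^\vee}=\prod_\ell\vartheta_1(\xi_\ell;\tau/2)P$; $W^{BC_N}=\prod_\ell\vartheta_1(\xi_\ell;\tau)\vartheta_0(2\xi_\ell;2\tau)P$;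 $W^{D_N}=P$. $\mathbf{z}/L=(z_1/L,\dots,z_N/L)$; $\sigma_m(w)$ replaces $z_m$ by $z_m+w$. *)

(* Defs.v *)
From Stdlib Require Import Reals ZArith Lra.
From Coquelicot Require Import Coquelicot.
Open Scope R_scope.

Definition cexp (z : C) : C :=
  (exp (Re z) * cos (Im z), exp (Re z) * sin (Im z)).

(* For the absolutely convergent theta series this is the usual sum. *)
Definition zsum (f : Z -> C) : C :=
  (Series (fun n => Re (f (Z.of_nat n))) +
   Series (fun n => Re (f (- Z.of_nat n - 1)%Z)),
   Series (fun n => Im (f (Z.of_nat n))) +
   Series (fun n => Im (f (- Z.of_nat n - 1)%Z))).

Definition sgnZ (n : Z) : C := if Z.even n then RtoC 1 else RtoC (-1).

(* q0^x with q0 = exp(pi i tau), i.e. exp(pi i tau x) *)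
Definition q0pow (tau : C) (x : R) : C := cexp (Cmult (Cmult (RtoC PI) Ci) (Cmult tau (RtoC x))).

Definition halfZ (n : Z) : R := IZR n - /2.

Definition theta0 (v tau : C) : C :=
  zsum (fun n => Cmult (Cmult (sgnZ n) (q0pow tau (IZR n ^ 2)))
                       (cexp (Cmult (Cmult (RtoC (2 * PI * IZR n)) Ci) v))).
Definition theta1 (v tau : C) : C :=
  Cmult Ci (zsum (fun n => Cmult (Cmult (sgnZ n) (q0pow tau (halfZ n ^ 2)))
                       (cexp (Cmult (Cmult (RtoC ((2 * IZR n - 1) * PI)) Ci) v)))).
Definition theta2 (v tau : C) : C :=
  zsum (fun n => Cmult (q0pow tau (halfZ n ^ 2))
                       (cexp (Cmult (Cmult (RtoC ((2 * IZR n - 1) * PI)) Ci) v))).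
Definition theta3 (v tau : C) : C :=
  zsum (fun n => Cmult (q0pow tau (IZR n ^ 2))
                       (cexp (Cmult (Cmult (RtoC (2 * PI * IZR n)) Ci) v))).

Definition theta_s (N : nat) (v tau : C) : C :=
  if Nat.even N then theta0 v tau else theta3 v tau.

Inductive RootSys := TA | TB | TBv | TC | TCv | TBC | TD.
(* TA with parameter N stands for A_{N-1}; the others for X_N. *)

Definition calN (Rs : RootSys) (N : nat) : nat :=
  match Rs with
  | TA => N
  | TB => 2 * N - 1
  | TBv | TCv => 2 * N
  | TC => 2 * (N + 1)
  | TBC => 2 * N + 1
  | TD => 2 * (N - 1)
  end.

Fixpoint sumR (n : nat) (f : nat -> R) : R :=
  match n with O => 0 | S k => sumR k f + f k end.
Fixpoint sumC (n : nat) (f : nat -> C) : C :=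
  match n with O => RtoC 0 | S k => Cplus (sumC k f) (f k) end.
Fixpoint prodC (n : nat) (f : nat -> C) : C :=
  match n with O => RtoC 1 | S k => Cmult (prodC k f) (f k) end.

(* vectors xi = (xi_1,...,xi_N) are represented by xi : nat -> C, xi_j = xi (j-1) *)
Definition Pfac (N : nat) (xi : nat -> C) (tau : C) : C :=
  prodC N (fun k => prodC k (fun j =>
    Cmult (theta1 (Cminus (xi k) (xi j)) tau) (theta1 (Cplus (xi k) (xi j)) tau))).

Definition Wden (Rs : RootSys) (N : nat) (xi : nat -> C) (tau : C) : C :=
  match Rs with
  | TA => prodC N (fun k => prodC k (fun j => theta1 (Cminus (xi k) (xi j)) tau))
  | TB => Cmult (prodC N (fun l => theta1 (xi l) tau)) (Pfac N xi tau)
  | TBv => Cmult (prodC N (fun l => theta1 (Cmult (RtoC 2) (xi l)) (Cmult (RtoC 2) tau)))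
                 (Pfac N xi tau)
  | TC => Cmult (prodC N (fun l => theta1 (Cmult (RtoC 2) (xi l)) tau)) (Pfac N xi tau)
  | TCv => Cmult (prodC N (fun l => theta1 (xi l) (Cdiv tau (RtoC 2)))) (Pfac N xi tau)
  | TBC => Cmult (prodC N (fun l => Cmult (theta1 (xi l) tau)
                                          (theta0 (Cmult (RtoC 2) (xi l)) (Cmult (RtoC 2) tau))))
                 (Pfac N xi tau)
  | TD => Pfac N xi tau
  end.

Definition tauLW (L W : R) : C := (0, W / L).

Definition Qfun (Rs : RootSys) (N : nat) (L W : R) (z : nat -> C) : R :=
  let tau := tauLW L W in
  let zL := fun j => Cdiv (z j) (RtoC L) in
  exp (- (2 * PI * INR (calN Rs N)) / (L * W) * sumR N (fun j => Im (z j) ^ 2)) *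
  (match Rs with
   | TA => Cmod (theta_s N (sumC N zL) tau) ^ 2
   | _ => 1
   end) *
  Cmod (Wden Rs N zL tau) ^ 2.

(* sigma_m(w): replace z_m by z_m + w (0-based index m) *)
Definition sigma_m (m : nat) (w : C) (z : nat -> C) : nat -> C :=
  fun j => if Nat.eqb j m then Cplus (z j) w else z j.

(* Main.v *)
Require Import Defs.
From Stdlib Require Import Reals.
From Coquelicot Require Import Coquelicot.
From Stdlib Require Import ZArith Lra Lia Arith FunctionalExtensionality.
Open Scope R_scope.

Ltac ceq := apply injective_projections; unfold Re, Im in *; simpl; try field; try ring.

Lemma exp_le_mono x y : x <= y -> exp x <= exp y.
Proof. intros [H|H]. left; apply exp_increasing; auto. subst; lra. Qed.

Lemma exp_nat_mul (n : nat) x : exp (INR n * x) = exp x ^ n.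
Proof.
  induction n. simpl. rewrite Rmult_0_l, exp_0; auto.
  rewrite S_INR. replace ((INR n + 1) * x) with (INR n * x + x) by ring.
  rewrite exp_plus, IHn. simpl. ring.
Qed.

Lemma gauss_ex_series a b c : 0 < a ->
  ex_series (fun n => exp (- a * INR n ^ 2 + b * INR n + c)).
Proof.
  intros Ha.
  set (K := c + (b+1)^2 / (4*a)).
  apply (@ex_series_le R_AbsRing R_CompleteNormedModule _ (fun n => exp K * (exp (-1)) ^ n)).
  - intros n. change (norm ?x) with (Rabs x).
    rewrite Rabs_pos_eq by (left; apply exp_pos).
    rewrite <- exp_nat_mul, <- exp_plus. apply exp_le_mono.
    set (x := INR n).
    assert (K + x * (-1) - (- a * x ^ 2 + b * x + c) = a * (x - (b+1)/(2*a))^2).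
    { unfold K. field. lra. }
    assert (0 <= a * (x - (b+1)/(2*a))^2).
    { apply Rmult_le_pos. lra. apply pow2_ge_0. }
    lra.
  - apply (ex_series_scal_l (exp K) (fun n => exp (-1) ^ n)).
    apply ex_series_geom. rewrite Rabs_pos_eq by (left; apply exp_pos).
    rewrite <- exp_0. apply exp_increasing. lra.
Qed.

Lemma Rabs_fst_le (z : C) : Rabs (fst z) <= Cmod z.
Proof.
  unfold Cmod. rewrite <- sqrt_Rsqr_abs. apply sqrt_le_1_alt. unfold Rsqr.
  pose proof (pow2_ge_0 (snd z)). simpl. nra.
Qed.
Lemma Rabs_snd_le (z : C) : Rabs (snd z) <= Cmod z.
Proof.
  unfold Cmod. rewrite <- sqrt_Rsqr_abs. apply sqrt_le_1_alt. unfold Rsqr.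
  pose proof (pow2_ge_0 (fst z)). simpl. nra.
Qed.

Lemma cexp_add a b : cexp (Cplus a b) = Cmult (cexp a) (cexp b).
Proof.
  unfold cexp. simpl. rewrite exp_plus, cos_plus, sin_plus. ceq.
Qed.

Lemma Cmod_cexp z : Cmod (cexp z) = exp (fst z).
Proof.
  unfold Cmod, cexp, Re, Im. cbn [fst snd].
  replace ((exp (fst z) * cos (snd z)) ^ 2 + (exp (fst z) * sin (snd z)) ^ 2)
    with ((exp (fst z))²) .
  rewrite sqrt_Rsqr; auto. left; apply exp_pos.
  pose proof (sin2_cos2 (snd z)). unfold Rsqr in *. nra.
Qed.

Lemma sin_2PIn (n : Z) : sin (2 * PI * IZR n) = 0.
Proof. apply sin_eq_0_1. exists (2 * n)%Z. rewrite mult_IZR. ring. Qed.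
Lemma cos_2PIn (n : Z) : cos (2 * PI * IZR n) = 1.
Proof.
  replace (2 * PI * IZR n) with (2 * (PI * IZR n)) by ring.
  rewrite cos_2a_sin. rewrite (sin_eq_0_1 (PI * IZR n)). ring.
  exists n; ring.
Qed.

Lemma cexp_2PIn (n : Z) x : cexp (x, 2 * PI * IZR n) = RtoC (exp x).
Proof. unfold cexp. simpl. rewrite sin_2PIn, cos_2PIn. ceq. Qed.
Lemma cexp_mPI x : cexp (x, - PI) = RtoC (- exp x).
Proof. unfold cexp. simpl. rewrite cos_neg, sin_neg, cos_PI, sin_PI. ceq. Qed.

Definition gbound (g : Z -> C) := exists a b c, 0 < a /\
  forall n, Cmod (g n) <= exp (- a * IZR n ^ 2 + b * IZR n + c).

Definition zsumm (g : Z -> C) :=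
  ex_series (fun n => fst (g (Z.of_nat n))) /\
  ex_series (fun n => fst (g (- Z.of_nat n - 1)%Z)) /\
  ex_series (fun n => snd (g (Z.of_nat n))) /\
  ex_series (fun n => snd (g (- Z.of_nat n - 1)%Z)).

Lemma exs_le (u v : nat -> R) : (forall n, Rabs (u n) <= v n) -> ex_series v -> ex_series u.
Proof. intros H Hv. apply (@ex_series_le R_AbsRing R_CompleteNormedModule u v); auto. Qed.

Lemma gbound_zsumm g : gbound g -> zsumm g.
Proof.
  intros (a & b & c & Ha & H).
  assert (Hp : forall n, Cmod (g (Z.of_nat n)) <= exp (- a * INR n ^ 2 + b * INR n + c)).
  { intros n. rewrite INR_IZR_INZ. apply H. }
  assert (Hn : forall n, Cmod (g (- Z.of_nat n - 1)%Z) <=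
      exp (- a * INR n ^ 2 + (-2*a - b) * INR n + (c - a - b))).
  { intros n. eapply Rle_trans. apply H. apply exp_le_mono.
    rewrite minus_IZR, opp_IZR, <- INR_IZR_INZ. right; ring. }
  pose proof (gauss_ex_series a b c Ha).
  pose proof (gauss_ex_series a (-2*a-b) (c-a-b) Ha).
  split; [|split; [|split]].
  - eapply exs_le; [intros n; eapply Rle_trans; [apply Rabs_fst_le | apply Hp] | exact H0].
  - eapply exs_le; [intros n; eapply Rle_trans; [apply Rabs_fst_le | apply Hn] | exact H1].
  - eapply exs_le; [intros n; eapply Rle_trans; [apply Rabs_snd_le | apply Hp] | exact H0].
  - eapply exs_le; [intros n; eapply Rle_trans; [apply Rabs_snd_le | apply Hn] | exact H1].
Qed.

Lemma gbound_shift g : gbound g -> gbound (fun n => g (n + 1)%Z).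
Proof.
  intros (a & b & c & Ha & H). exists a, (b - 2*a), (c - a + b). split; auto.
  intros n. eapply Rle_trans. apply H. apply exp_le_mono. rewrite plus_IZR. right; ring.
Qed.

Lemma exs_scal c (u : nat -> R) : ex_series u -> ex_series (fun n => c * u n).
Proof. intros H. exact (ex_series_scal_l c u H). Qed.

Lemma zsum_scale c g : zsumm g -> zsum (fun n => Cmult c (g n)) = Cmult c (zsum g).
Proof.
  intros (H1 & H2 & H3 & H4). unfold zsum, Re, Im. cbn [fst snd Cmult].
  rewrite (Series_minus (fun n => fst c * fst (g (Z.of_nat n))) (fun n => snd c * snd (g (Z.of_nat n))))
    by (apply exs_scal; auto).
  rewrite (Series_minus (fun n => fst c * fst (g (- Z.of_nat n - 1)%Z)) (fun n => snd c * snd (g (- Z.of_nat n - 1)%Z)))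
    by (apply exs_scal; auto).
  rewrite (Series_plus (fun n => fst c * snd (g (Z.of_nat n))) (fun n => snd c * fst (g (Z.of_nat n))))
    by (apply exs_scal; auto).
  rewrite (Series_plus (fun n => fst c * snd (g (- Z.of_nat n - 1)%Z)) (fun n => snd c * fst (g (- Z.of_nat n - 1)%Z)))
    by (apply exs_scal; auto).
  rewrite !Series_scal_l. apply injective_projections; unfold Cmult; cbn [fst snd]; ring.
Qed.

Lemma zsum_shift g : zsumm g -> zsum (fun n => g (n + 1)%Z) = zsum g.
Proof.
  intros (H1 & H2 & H3 & H4).
  assert (Pos : forall h : Z -> R, ex_series (fun n => h (Z.of_nat n)) ->
     Series (fun n => h (Z.of_nat n + 1)%Z) = Series (fun n => h (Z.of_nat n)) - h 0%Z).
  { intros h Hh. rewrite (Series_incr_1 (fun n => h (Z.of_nat n))) by auto.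
    change (Z.of_nat 0) with 0%Z. rewrite (Series_ext (fun n => h (Z.of_nat n + 1)%Z) (fun k => h (Z.of_nat (S k)))).
    ring. intros n. f_equal. lia. }
  assert (Neg : forall h : Z -> R, ex_series (fun n => h (- Z.of_nat n - 1)%Z) ->
     Series (fun n => h (- Z.of_nat n - 1 + 1)%Z) = h 0%Z + Series (fun n => h (- Z.of_nat n - 1)%Z)).
  { intros h Hh.
    assert (E : ex_series (fun n => h (- Z.of_nat n)%Z)).
    { apply (proj2 (ex_series_incr_1 (fun n => h (- Z.of_nat n)%Z))).
      replace (fun k => h (- Z.of_nat (S k))%Z) with (fun n => h (- Z.of_nat n - 1)%Z); auto.
      apply functional_extensionality; intros n; f_equal; lia. }
    rewrite (Series_ext _ (fun n => h (- Z.of_nat n)%Z)) by (intros; f_equal; lia).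
    rewrite Series_incr_1 by auto. change (- Z.of_nat 0)%Z with 0%Z.
    rewrite (Series_ext (fun k => h (- Z.of_nat (S k))%Z) (fun n => h (- Z.of_nat n - 1)%Z)) by (intros; f_equal; lia).
    auto. }
  unfold zsum, Re, Im.
  rewrite (Pos (fun n => fst (g n))), (Pos (fun n => snd (g n))), (Neg (fun n => fst (g n))), (Neg (fun n => snd (g n))) by auto.
  apply injective_projections; cbn [fst snd]; ring.
Qed.

Lemma zsum_lin f g c : gbound g -> (forall n, f n = Cmult c (g n)) -> zsum f = Cmult c (zsum g).
Proof.
  intros Hg H. replace f with (fun n => Cmult c (g n)).
  apply zsum_scale, gbound_zsumm; auto.
  apply functional_extensionality; intros; auto.
Qed.

Lemma zsum_qp f g c : gbound g -> (forall n, f n = Cmult c (g (n + 1)%Z)) -> zsum f = Cmult c (zsum g).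
Proof.
  intros Hg H. rewrite (zsum_lin f (fun n => g (n + 1)%Z) c).
  rewrite zsum_shift; auto. apply gbound_zsumm; auto.
  apply gbound_shift; auto. auto.
Qed.

Definition T0 v tau (n : Z) : C := Cmult (Cmult (sgnZ n) (q0pow tau (IZR n ^ 2)))
                       (cexp (Cmult (Cmult (RtoC (2 * PI * IZR n)) Ci) v)).
Definition T3 v tau (n : Z) : C := Cmult (q0pow tau (IZR n ^ 2))
                       (cexp (Cmult (Cmult (RtoC (2 * PI * IZR n)) Ci) v)).
Definition T1 v tau (n : Z) : C := Cmult (Cmult (sgnZ n) (q0pow tau (halfZ n ^ 2)))
                       (cexp (Cmult (Cmult (RtoC ((2 * IZR n - 1) * PI)) Ci) v)).

Lemma theta0_T v tau : theta0 v tau = zsum (T0 v tau). Proof. reflexivity. Qed.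
Lemma theta3_T v tau : theta3 v tau = zsum (T3 v tau). Proof. reflexivity. Qed.
Lemma theta1_T v tau : theta1 v tau = Cmult Ci (zsum (T1 v tau)). Proof. reflexivity. Qed.

Lemma Cmod_m1 : Cmod (RtoC (-1)) = 1.
Proof. rewrite Cmod_R. unfold Rabs; destruct Rcase_abs; lra. Qed.
Lemma Cmod_sgnZ n : Cmod (sgnZ n) = 1.
Proof. unfold sgnZ; destruct (Z.even n). rewrite Cmod_R; apply Rabs_R1. apply Cmod_m1. Qed.

Lemma sgnZ_succ n : sgnZ (n + 1) = Cmult (RtoC (-1)) (sgnZ n).
Proof.
  unfold sgnZ. replace (n + 1)%Z with (Z.succ n) by lia.
  rewrite Z.even_succ, <- Z.negb_even. destruct (Z.even n); simpl; ceq.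
Qed.

Lemma gbound_T0 v tau : 0 < snd tau -> gbound (T0 v tau).
Proof.
  intros Ht. exists (PI * snd tau), (- 2 * PI * snd v), 0. split.
  apply Rmult_lt_0_compat; auto; apply PI_RGT_0.
  intros n. unfold T0, q0pow. rewrite !Cmod_mult, Cmod_sgnZ, !Cmod_cexp, Rmult_1_l, <- exp_plus.
  apply exp_le_mono; right. unfold Re, Im. simpl. ring.
Qed.
Lemma gbound_T3 v tau : 0 < snd tau -> gbound (T3 v tau).
Proof.
  intros Ht. exists (PI * snd tau), (- 2 * PI * snd v), 0. split.
  apply Rmult_lt_0_compat; auto; apply PI_RGT_0.
  intros n. unfold T3, q0pow. rewrite !Cmod_mult, !Cmod_cexp, <- exp_plus.
  apply exp_le_mono; right. unfold Re, Im. simpl. ring.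
Qed.
Lemma gbound_T1 v tau : 0 < snd tau -> gbound (T1 v tau).
Proof.
  intros Ht. exists (PI * snd tau), (PI * snd tau - 2 * PI * snd v), (- PI * snd tau / 4 + PI * snd v). split.
  apply Rmult_lt_0_compat; auto; apply PI_RGT_0.
  intros n. unfold T1, q0pow, halfZ. rewrite !Cmod_mult, Cmod_sgnZ, !Cmod_cexp, Rmult_1_l, <- exp_plus.
  apply exp_le_mono; right. unfold Re, Im. simpl. field.
Qed.

Lemma cexp_comb (s s' k c A B A' B' E : C) :
  Cplus A B = Cplus E (Cplus A' B') -> s = Cmult k s' -> Cmult k (cexp E) = c ->
  Cmult (Cmult s (cexp A)) (cexp B) = Cmult c (Cmult (Cmult s' (cexp A')) (cexp B')).
Proof.
  intros H1 H2 H3.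
  transitivity (Cmult s (cexp (Cplus A B))).
  { rewrite cexp_add. generalize (cexp A) (cexp B). intros; ceq. }
  rewrite H1, !cexp_add, H2, <- H3. generalize (cexp E) (cexp A') (cexp B'). intros. ceq.
Qed.
Lemma cexp_comb3 (c A B A' B' E : C) :
  Cplus A B = Cplus E (Cplus A' B') -> cexp E = c ->
  Cmult (cexp A) (cexp B) = Cmult c (Cmult (cexp A') (cexp B')).
Proof.
  intros H1 H3.
  transitivity (cexp (Cplus A B)). { rewrite cexp_add. auto. }
  rewrite H1, !cexp_add, <- H3. generalize (cexp E) (cexp A') (cexp B'). intros. ceq.
Qed.

Definition Eqp v tau : C := Cplus (Cmult (Cmult (RtoC (- PI)) Ci) tau) (Cmult (Cmult (RtoC (-2 * PI)) Ci) v).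

Lemma Cmod_Eqp v tau : Cmod (Cmult (RtoC (-1)) (cexp (Eqp v tau))) = exp (PI * snd tau + 2 * PI * snd v).
Proof.
  rewrite Cmod_mult, Cmod_cexp, Cmod_m1, Rmult_1_l. f_equal.
  unfold Eqp. simpl. ring.
Qed.
Lemma Cmod_Eqp1 v tau : Cmod (cexp (Eqp v tau)) = exp (PI * snd tau + 2 * PI * snd v).
Proof. rewrite Cmod_cexp. f_equal. unfold Eqp. simpl. ring. Qed.

Lemma theta0_per v tau : 0 < snd tau -> theta0 (Cplus v (RtoC 1)) tau = Cmult (RtoC 1) (theta0 v tau).
Proof.
  intros Ht. rewrite !theta0_T. apply zsum_lin. apply gbound_T0; auto.
  intros n. unfold T0, q0pow. apply (cexp_comb _ _ (RtoC 1) _ _ _ _ _ (0, 2 * PI * IZR n)).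
  ceq. ceq. rewrite cexp_2PIn, exp_0. ceq.
Qed.
Lemma theta3_per v tau : 0 < snd tau -> theta3 (Cplus v (RtoC 1)) tau = Cmult (RtoC 1) (theta3 v tau).
Proof.
  intros Ht. rewrite !theta3_T. apply zsum_lin. apply gbound_T3; auto.
  intros n. unfold T3, q0pow. apply (cexp_comb3 _ _ _ _ _ (0, 2 * PI * IZR n)).
  ceq. rewrite cexp_2PIn, exp_0. ceq.
Qed.
Lemma theta1_per v tau : 0 < snd tau -> theta1 (Cplus v (RtoC 1)) tau = Cmult (RtoC (-1)) (theta1 v tau).
Proof.
  intros Ht. rewrite !theta1_T.
  rewrite (zsum_lin _ (T1 v tau) (RtoC (-1))). generalize (zsum (T1 v tau)); intros; ceq.
  apply gbound_T1; auto.
  intros n. unfold T1, q0pow. apply (cexp_comb _ _ (RtoC 1) _ _ _ _ _ (Cplus (0, 2 * PI * IZR n) (0, - PI))).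
  ceq. ceq. rewrite cexp_add, cexp_2PIn, cexp_mPI, exp_0. ceq.
Qed.

Lemma theta0_qp v tau : 0 < snd tau -> theta0 (Cplus v tau) tau = Cmult (Cmult (RtoC (-1)) (cexp (Eqp v tau))) (theta0 v tau).
Proof.
  intros Ht. rewrite !theta0_T. apply zsum_qp. apply gbound_T0; auto.
  intros n. unfold T0, q0pow. rewrite sgnZ_succ.
  apply (cexp_comb _ _ (RtoC (-1)) _ _ _ _ _ (Eqp v tau)).
  unfold Eqp; rewrite plus_IZR; ceq. generalize (sgnZ n); intros; ceq. auto.
Qed.
Lemma theta3_qp v tau : 0 < snd tau -> theta3 (Cplus v tau) tau = Cmult (cexp (Eqp v tau)) (theta3 v tau).
Proof.
  intros Ht. rewrite !theta3_T. apply zsum_qp. apply gbound_T3; auto.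
  intros n. unfold T3, q0pow.
  apply (cexp_comb3 _ _ _ _ _ (Eqp v tau)).
  unfold Eqp; rewrite plus_IZR; ceq. auto.
Qed.
Lemma theta1_qp v tau : 0 < snd tau -> theta1 (Cplus v tau) tau = Cmult (Cmult (RtoC (-1)) (cexp (Eqp v tau))) (theta1 v tau).
Proof.
  intros Ht. rewrite !theta1_T.
  rewrite (zsum_qp _ (T1 v tau) (Cmult (RtoC (-1)) (cexp (Eqp v tau)))).
  generalize (zsum (T1 v tau)) (cexp (Eqp v tau)); intros; ceq.
  apply gbound_T1; auto.
  intros n. unfold T1, q0pow, halfZ. rewrite sgnZ_succ.
  apply (cexp_comb _ _ (RtoC (-1)) _ _ _ _ _ (Eqp v tau)).
  unfold Eqp; rewrite plus_IZR; ceq. generalize (sgnZ n); intros; ceq. auto.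
Qed.

Lemma C1p v tau : 0 < snd tau -> Cmod (theta1 (Cplus v (RtoC 1)) tau) = Cmod (theta1 v tau).
Proof. intros; rewrite theta1_per, Cmod_mult, Cmod_m1 by auto; ring. Qed.
Lemma C0p v tau : 0 < snd tau -> Cmod (theta0 (Cplus v (RtoC 1)) tau) = Cmod (theta0 v tau).
Proof. intros; rewrite theta0_per, Cmod_mult, Cmod_R, Rabs_R1 by auto; ring. Qed.
Lemma C3p v tau : 0 < snd tau -> Cmod (theta3 (Cplus v (RtoC 1)) tau) = Cmod (theta3 v tau).
Proof. intros; rewrite theta3_per, Cmod_mult, Cmod_R, Rabs_R1 by auto; ring. Qed.
Lemma C1t v tau : 0 < snd tau -> Cmod (theta1 (Cplus v tau) tau) = exp (PI * snd tau + 2 * PI * snd v) * Cmod (theta1 v tau).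
Proof. intros; rewrite theta1_qp, Cmod_mult, Cmod_Eqp by auto; ring. Qed.
Lemma C0t v tau : 0 < snd tau -> Cmod (theta0 (Cplus v tau) tau) = exp (PI * snd tau + 2 * PI * snd v) * Cmod (theta0 v tau).
Proof. intros; rewrite theta0_qp, Cmod_mult, Cmod_Eqp by auto; ring. Qed.
Lemma C3t v tau : 0 < snd tau -> Cmod (theta3 (Cplus v tau) tau) = exp (PI * snd tau + 2 * PI * snd v) * Cmod (theta3 v tau).
Proof. intros; rewrite theta3_qp, Cmod_mult, Cmod_Eqp1 by auto; ring. Qed.

Definition dd (b : bool) (tau : C) : C := if b then tau else RtoC 1.
Definition B2R (b : bool) : R := if b then 1 else 0.

Lemma th1_sh b v tau : 0 < snd tau ->
  Cmod (theta1 (Cplus v (dd b tau)) tau) = exp (B2R b * (PI * snd tau + 2 * PI * snd v)) * Cmod (theta1 v tau).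
Proof.
  intros Ht; destruct b; simpl.
  rewrite C1t by auto. f_equal. f_equal. ring.
  rewrite C1p by auto. rewrite Rmult_0_l, exp_0. ring.
Qed.

Lemma th1_shm b v tau : 0 < snd tau ->
  Cmod (theta1 (Cminus v (dd b tau)) tau) = exp (B2R b * (PI * snd tau - 2 * PI * snd v)) * Cmod (theta1 v tau).
Proof.
  intros Ht. pose proof (th1_sh b (Cminus v (dd b tau)) tau Ht) as H.
  replace (Cplus (Cminus v (dd b tau)) (dd b tau)) with v in H by ceq.
  rewrite H. rewrite <- Rmult_assoc, <- exp_plus.
  destruct b; simpl; unfold Cminus, Copp; simpl.
  replace (1 * (PI * snd tau - 2 * PI * snd v) + 1 * (PI * snd tau + 2 * PI * (snd v + - snd tau))) with 0 by ring.
  rewrite exp_0; ring.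
  replace (0 * (PI * snd tau - 2 * PI * snd v) + 0 * (PI * snd tau + 2 * PI * (snd v + - 0))) with 0 by ring.
  rewrite exp_0; ring.
Qed.

Lemma ths_sh N b v tau : 0 < snd tau ->
  Cmod (theta_s N (Cplus v (dd b tau)) tau) = exp (B2R b * (PI * snd tau + 2 * PI * snd v)) * Cmod (theta_s N v tau).
Proof.
  intros Ht; unfold theta_s; destruct (Nat.even N); destruct b; simpl.
  rewrite C0t by auto. f_equal. f_equal. ring.
  rewrite C0p by auto. rewrite Rmult_0_l, exp_0. ring.
  rewrite C3t by auto. f_equal. f_equal. ring.
  rewrite C3p by auto. rewrite Rmult_0_l, exp_0. ring.
Qed.

Lemma snd2 tau : snd (Cmult (RtoC 2) tau) = 2 * snd tau.
Proof. simpl; ring. Qed.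
Lemma sndh tau : snd (Cdiv tau (RtoC 2)) = snd tau / 2.
Proof. unfold Cdiv, Cinv; simpl; field. Qed.

Lemma thBv b x tau : 0 < snd tau ->
  Cmod (theta1 (Cmult (RtoC 2) (Cplus x (dd b tau))) (Cmult (RtoC 2) tau)) =
  exp (B2R b * (2 * PI * snd tau + 4 * PI * snd x)) * Cmod (theta1 (Cmult (RtoC 2) x) (Cmult (RtoC 2) tau)).
Proof.
  intros Ht. assert (H2 : 0 < snd (Cmult (RtoC 2) tau)) by (rewrite snd2; lra).
  destruct b; simpl dd; simpl B2R.
  - replace (Cmult (RtoC 2) (Cplus x tau)) with (Cplus (Cmult (RtoC 2) x) (Cmult (RtoC 2) tau)) by ceq.
    rewrite C1t by auto. rewrite !snd2. f_equal. f_equal. ring.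
  - replace (Cmult (RtoC 2) (Cplus x (RtoC 1))) with (Cplus (Cplus (Cmult (RtoC 2) x) (RtoC 1)) (RtoC 1)) by ceq.
    rewrite !C1p by auto. rewrite Rmult_0_l, exp_0. ring.
Qed.

Lemma thC b x tau : 0 < snd tau ->
  Cmod (theta1 (Cmult (RtoC 2) (Cplus x (dd b tau))) tau) =
  exp (B2R b * (4 * PI * snd tau + 8 * PI * snd x)) * Cmod (theta1 (Cmult (RtoC 2) x) tau).
Proof.
  intros Ht. destruct b; simpl dd; simpl B2R.
  - replace (Cmult (RtoC 2) (Cplus x tau)) with (Cplus (Cplus (Cmult (RtoC 2) x) tau) tau) by ceq.
    rewrite !C1t by auto. rewrite Rmult_assoc, <- Rmult_assoc, <- exp_plus.
    f_equal. f_equal. simpl. ring.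
  - replace (Cmult (RtoC 2) (Cplus x (RtoC 1))) with (Cplus (Cplus (Cmult (RtoC 2) x) (RtoC 1)) (RtoC 1)) by ceq.
    rewrite !C1p by auto. rewrite Rmult_0_l, exp_0. ring.
Qed.

Lemma thCv b x tau : 0 < snd tau ->
  Cmod (theta1 (Cplus x (dd b tau)) (Cdiv tau (RtoC 2))) =
  exp (B2R b * (2 * PI * snd tau + 4 * PI * snd x)) * Cmod (theta1 x (Cdiv tau (RtoC 2))).
Proof.
  intros Ht. assert (H2 : 0 < snd (Cdiv tau (RtoC 2))) by (rewrite sndh; lra).
  destruct b; simpl dd; simpl B2R.
  - replace (Cplus x tau) with (Cplus (Cplus x (Cdiv tau (RtoC 2))) (Cdiv tau (RtoC 2)))
      by (unfold Cdiv, Cinv; ceq).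
    rewrite !C1t by auto. rewrite Rmult_assoc, <- Rmult_assoc, <- exp_plus.
    f_equal. f_equal. rewrite sndh. change (snd (Cplus x (Cdiv tau (RtoC 2)))) with (snd x + snd (Cdiv tau (RtoC 2))). rewrite sndh. field.
  - rewrite (C1p x (Cdiv tau (RtoC 2)) H2). rewrite Rmult_0_l, exp_0. ring.
Qed.

Lemma thBC0 b x tau : 0 < snd tau ->
  Cmod (theta0 (Cmult (RtoC 2) (Cplus x (dd b tau))) (Cmult (RtoC 2) tau)) =
  exp (B2R b * (2 * PI * snd tau + 4 * PI * snd x)) * Cmod (theta0 (Cmult (RtoC 2) x) (Cmult (RtoC 2) tau)).
Proof.
  intros Ht. assert (H2 : 0 < snd (Cmult (RtoC 2) tau)) by (rewrite snd2; lra).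
  destruct b; simpl dd; simpl B2R.
  - replace (Cmult (RtoC 2) (Cplus x tau)) with (Cplus (Cmult (RtoC 2) x) (Cmult (RtoC 2) tau)) by ceq.
    rewrite C0t by auto. rewrite !snd2. f_equal. f_equal. ring.
  - replace (Cmult (RtoC 2) (Cplus x (RtoC 1))) with (Cplus (Cplus (Cmult (RtoC 2) x) (RtoC 1)) (RtoC 1)) by ceq.
    rewrite !C0p by auto. rewrite Rmult_0_l, exp_0. ring.
Qed.

Fixpoint prodR (n : nat) (f : nat -> R) : R :=
  match n with O => 1 | S k => prodR k f * f k end.

Lemma Cmod_prodC n f : Cmod (prodC n f) = prodR n (fun k => Cmod (f k)).
Proof.
  induction n; simpl. rewrite Cmod_R; apply Rabs_R1.
  rewrite Cmod_mult, IHn; auto.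
Qed.

Lemma Cmod_prodC2 n f : Cmod (prodC n (fun k => prodC k (f k))) = prodR n (fun k => prodR k (fun j => Cmod (f k j))).
Proof.
  induction n; simpl. rewrite Cmod_R; apply Rabs_R1.
  rewrite Cmod_mult, IHn, Cmod_prodC; auto.
Qed.

Lemma sumR_ext n f g : (forall j, (j < n)%nat -> f j = g j) -> sumR n f = sumR n g.
Proof. induction n; intros H; simpl; auto. f_equal. apply IHn; intros; apply H; lia. apply H; lia. Qed.
Lemma prodR_ext n f g : (forall j, (j < n)%nat -> f j = g j) -> prodR n f = prodR n g.
Proof. induction n; intros H; simpl; auto. f_equal. apply IHn; intros; apply H; lia. apply H; lia. Qed.

Lemma prodR_exp n F G e : (forall j, (j < n)%nat -> G j = F j * exp (e j)) ->
  prodR n G = prodR n F * exp (sumR n e).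
Proof.
  induction n; intros H; simpl. rewrite exp_0; ring.
  rewrite IHn, H, exp_plus. ring. lia. intros; apply H; lia.
Qed.

Lemma sumR_upd n m f g : sumR n (fun j => if j =? m then g j else f j) =
  sumR n f + (if m <? n then g m - f m else 0).
Proof.
  induction n; simpl. ring.
  rewrite IHn. destruct (Nat.ltb_spec m n), (Nat.eqb_spec n m), (Nat.ltb_spec m (S n)); subst; try lia; ring.
Qed.

Lemma sumR_ind n m (psi : R) : sumR n (fun j => if j =? m then psi else 0) = if m <? n then psi else 0.
Proof.
  induction n; simpl. auto.
  rewrite IHn. destruct (Nat.ltb_spec m n), (Nat.eqb_spec n m), (Nat.ltb_spec m (S n)); subst; try lia; ring.
Qed.

Lemma sumR_pairs n m phi :
  sumR n (fun k => sumR k (fun j => if k =? m then phi j else if j =? m then phi k else 0)) =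
  if m <? n then sumR n phi - phi m else 0.
Proof.
  induction n; simpl. auto.
  rewrite IHn.
  destruct (Nat.eqb_spec n m).
  - subst. destruct (Nat.ltb_spec m m); try lia. destruct (Nat.ltb_spec m (S m)); try lia. replace (sumR m (fun j => phi j)) with (sumR m phi) by reflexivity. ring.
  - rewrite sumR_ind. destruct (Nat.ltb_spec m n), (Nat.ltb_spec m (S n)); try lia; ring.
Qed.

Lemma prod_single N m F G psi : (m < N)%nat ->
  (forall l, (l < N)%nat -> G l = F l * exp (if l =? m then psi else 0)) ->
  prodR N G = prodR N F * exp psi.
Proof.
  intros Hm H. rewrite (prodR_exp N F G _ H), sumR_ind.
  destruct (Nat.ltb_spec m N); try lia; auto.
Qed.

Lemma prod_pairs N m (F G : nat -> nat -> R) phi : (m < N)%nat ->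
  (forall k j, (j < k)%nat -> (k < N)%nat ->
     G k j = F k j * exp (if k =? m then phi j else if j =? m then phi k else 0)) ->
  prodR N (fun k => prodR k (G k)) = prodR N (fun k => prodR k (F k)) * exp (sumR N phi - phi m).
Proof.
  intros Hm H.
  rewrite (prodR_exp N (fun k => prodR k (F k)) (fun k => prodR k (G k))
     (fun k => sumR k (fun j => if k =? m then phi j else if j =? m then phi k else 0))).
  rewrite sumR_pairs. destruct (Nat.ltb_spec m N); try lia; auto.
  intros k Hk. apply prodR_exp. intros j Hj. apply H; auto.
Qed.

Lemma sumR_lin n a b f : sumR n (fun i => a + b * f i) = INR n * a + b * sumR n f.
Proof. induction n; simpl sumR. simpl; ring. rewrite IHn, S_INR. ring. Qed.

Lemma snd_sumC n f : snd (sumC n f) = sumR n (fun i => snd (f i)).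
Proof. induction n; simpl; auto. rewrite IHn; auto. Qed.

Definition upd (xi : nat -> C) m d : nat -> C := fun j => if j =? m then Cplus (xi j) d else xi j.

Lemma sumC_upd n m xi d : (m < n)%nat -> sumC n (upd xi m d) = Cplus (sumC n xi) d.
Proof.
  intros Hm. induction n; [lia|]. simpl. unfold upd at 2.
  destruct (Nat.eqb_spec n m).
  - subst. replace (sumC m (upd xi m d)) with (sumC m xi). ceq.
    clear. assert (forall k, (k <= m)%nat -> sumC k (upd xi m d) = sumC k xi).
    { induction k; intros; simpl; auto. rewrite IHk by lia. unfold upd.
      destruct (Nat.eqb_spec k m); try lia; auto. }
    symmetry; apply H; lia.
  - rewrite IHn by lia. ceq.
Qed.

Lemma exp_comb1 p r X : p = r -> exp p * X = X * exp r.
Proof. intros ->; ring. Qed.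
Lemma exp_comb2 p q r X Y : p + q = r -> exp p * X * (exp q * Y) = X * Y * exp r.
Proof. intros <-; rewrite exp_plus; ring. Qed.

Lemma sumR_const n c : sumR n (fun _ => c) = INR n * c.
Proof. induction n; simpl sumR. simpl; ring. rewrite IHn, S_INR; ring. Qed.

Lemma Pfac_sh N m xi b tau : (m < N)%nat -> 0 < snd tau ->
  Cmod (Pfac N (upd xi m (dd b tau)) tau) =
  Cmod (Pfac N xi tau) * exp ((INR N - 1) * (B2R b * (2 * PI * snd tau + 4 * PI * snd (xi m)))).
Proof.
  intros Hm Ht. unfold Pfac. rewrite !Cmod_prodC2.
  set (c := B2R b * (2 * PI * snd tau + 4 * PI * snd (xi m))).
  rewrite (prod_pairs N m
     (fun k j => Cmod (Cmult (theta1 (Cminus (xi k) (xi j)) tau) (theta1 (Cplus (xi k) (xi j)) tau)))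
     (fun k j => Cmod (Cmult (theta1 (Cminus (upd xi m (dd b tau) k) (upd xi m (dd b tau) j)) tau)
                             (theta1 (Cplus (upd xi m (dd b tau) k) (upd xi m (dd b tau) j)) tau)))
     (fun _ => c) Hm).
  - rewrite sumR_const. f_equal. f_equal. ring.
  - intros k j Hjk HkN. unfold upd.
    destruct (k =? m) eqn:Hk; destruct (j =? m) eqn:Hj; cbv beta iota.
    + apply Nat.eqb_eq in Hk; apply Nat.eqb_eq in Hj; lia.
    + apply Nat.eqb_eq in Hk. subst k.
      replace (Cminus (Cplus (xi m) (dd b tau)) (xi j)) with (Cplus (Cminus (xi m) (xi j)) (dd b tau)) by ceq.
      replace (Cplus (Cplus (xi m) (dd b tau)) (xi j)) with (Cplus (Cplus (xi m) (xi j)) (dd b tau)) by ceq.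
      rewrite !Cmod_mult, !th1_sh by auto. apply exp_comb2. unfold c. simpl. ring.
    + apply Nat.eqb_eq in Hj. subst j.
      replace (Cminus (xi k) (Cplus (xi m) (dd b tau))) with (Cminus (Cminus (xi k) (xi m)) (dd b tau)) by ceq.
      replace (Cplus (xi k) (Cplus (xi m) (dd b tau))) with (Cplus (Cplus (xi k) (xi m)) (dd b tau)) by ceq.
      rewrite !Cmod_mult, th1_shm, th1_sh by auto. apply exp_comb2. unfold c. simpl. ring.
    + rewrite exp_0; ring.
Qed.

Lemma single_gen N m xi d (f : C -> C) u : (m < N)%nat ->
  Cmod (f (Cplus (xi m) d)) = exp u * Cmod (f (xi m)) ->
  prodR N (fun l => Cmod (f (upd xi m d l))) = prodR N (fun l => Cmod (f (xi l))) * exp u.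
Proof.
  intros Hm H. apply (prod_single N m); auto. intros l Hl. unfold upd.
  destruct (Nat.eqb_spec l m). subst; rewrite H; ring. rewrite exp_0; ring.
Qed.

Lemma exp_fin p q r X Y : p + q = r -> X * exp p * (Y * exp q) = exp r * (X * Y).
Proof. intros <-; rewrite exp_plus; ring. Qed.

Lemma Wden_sh Rs N m xi b tau : Rs <> TA -> (m < N)%nat -> 0 < snd tau ->
  Cmod (Wden Rs N (upd xi m (dd b tau)) tau) =
  exp (INR (calN Rs N) * (B2R b * (PI * snd tau + 2 * PI * snd (xi m)))) * Cmod (Wden Rs N xi tau).
Proof.
  intros HR Hm Ht. destruct Rs; [congruence| | | | | | ]; unfold Wden; cbv iota;
    try rewrite !Cmod_mult; rewrite ?Cmod_prodC, Pfac_sh by auto.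
  - rewrite (single_gen N m xi (dd b tau) (fun x => theta1 x tau) (B2R b * (PI * snd tau + 2 * PI * snd (xi m)))) by (auto; apply th1_sh; auto).
    apply exp_fin. unfold calN. rewrite minus_INR, mult_INR by lia. simpl. ring.
  - rewrite (single_gen N m xi (dd b tau) (fun x => theta1 (Cmult (RtoC 2) x) (Cmult (RtoC 2) tau)) (B2R b * (2 * PI * snd tau + 4 * PI * snd (xi m)))) by (auto; apply thBv; auto).
    apply exp_fin. unfold calN. rewrite mult_INR. simpl. ring.
  - rewrite (single_gen N m xi (dd b tau) (fun x => theta1 (Cmult (RtoC 2) x) tau) (B2R b * (4 * PI * snd tau + 8 * PI * snd (xi m)))) by (auto; apply thC; auto).
    apply exp_fin. unfold calN. rewrite mult_INR, plus_INR. simpl. ring.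
  - rewrite (single_gen N m xi (dd b tau) (fun x => theta1 x (Cdiv tau (RtoC 2))) (B2R b * (2 * PI * snd tau + 4 * PI * snd (xi m)))) by (auto; apply thCv; auto).
    apply exp_fin. unfold calN. rewrite mult_INR. simpl. ring.
  - rewrite (single_gen N m xi (dd b tau) (fun x => Cmult (theta1 x tau) (theta0 (Cmult (RtoC 2) x) (Cmult (RtoC 2) tau))) (B2R b * (3 * PI * snd tau + 6 * PI * snd (xi m)))).
    apply exp_fin. unfold calN. rewrite plus_INR, mult_INR. simpl. ring.
    auto.
    rewrite !Cmod_mult, th1_sh, thBC0 by auto.
    replace (B2R b * (3 * PI * snd tau + 6 * PI * snd (xi m))) with
      (B2R b * (PI * snd tau + 2 * PI * snd (xi m)) + B2R b * (2 * PI * snd tau + 4 * PI * snd (xi m))) by ring.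
    rewrite exp_plus. ring.
  - rewrite <- Rmult_comm. f_equal. f_equal. unfold calN. rewrite mult_INR, minus_INR by lia. simpl. ring.
Qed.

Lemma WA_sh N m xi b tau : (m < N)%nat -> 0 < snd tau ->
  Cmod (theta_s N (sumC N (upd xi m (dd b tau))) tau) * Cmod (Wden TA N (upd xi m (dd b tau)) tau) =
  exp (INR N * (B2R b * (PI * snd tau + 2 * PI * snd (xi m)))) *
  (Cmod (theta_s N (sumC N xi) tau) * Cmod (Wden TA N xi tau)).
Proof.
  intros Hm Ht. rewrite sumC_upd, ths_sh by auto. unfold Wden; cbv iota. rewrite !Cmod_prodC2.
  set (phi := fun i => B2R b * (PI * snd tau + 2 * PI * snd (xi m)) + (-2 * PI * B2R b) * snd (xi i)).
  rewrite (prod_pairs N m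
     (fun k j => Cmod (theta1 (Cminus (xi k) (xi j)) tau))
     (fun k j => Cmod (theta1 (Cminus (upd xi m (dd b tau) k) (upd xi m (dd b tau) j)) tau))
     phi Hm).
  - unfold phi at 1. rewrite sumR_lin, snd_sumC. unfold phi.
    assert (E : forall p q r A B, p + q = r -> exp p * A * (B * exp q) = exp r * (A * B))
      by (intros; subst; rewrite exp_plus; ring).
    apply E; ring.
  - intros k j Hjk HkN. unfold upd.
    destruct (k =? m) eqn:Hk; destruct (j =? m) eqn:Hj; cbv beta iota.
    + apply Nat.eqb_eq in Hk; apply Nat.eqb_eq in Hj; lia.
    + apply Nat.eqb_eq in Hk. subst k.
      replace (Cminus (Cplus (xi m) (dd b tau)) (xi j)) with (Cplus (Cminus (xi m) (xi j)) (dd b tau)) by ceq.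
      rewrite th1_sh by auto. apply exp_comb1. unfold phi. simpl. ring.
    + apply Nat.eqb_eq in Hj. subst j.
      replace (Cminus (xi k) (Cplus (xi m) (dd b tau))) with (Cminus (Cminus (xi k) (xi m)) (dd b tau)) by ceq.
      rewrite th1_shm by auto. apply exp_comb1. unfold phi. simpl. ring.
    + rewrite exp_0; ring.
Qed.

Lemma fin_alg a S d X Y e : a * d + 2 * e = 0 ->
  exp (a * (S + d)) * X * (exp e * Y) ^ 2 = exp (a * S) * X * Y ^ 2.
Proof.
  intros H. replace (a * (S + d)) with (a * S + a * d) by ring. rewrite exp_plus.
  replace (exp (a * S) * exp (a * d) * X * (exp e * Y) ^ 2) with
    (exp (a * S) * X * Y ^ 2 * (exp (a * d) * exp e * exp e)) by ring.
  rewrite <- !exp_plus. replace (a * d + e + e) with 0 by lra. rewrite exp_0; ring.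
Qed.

Lemma fin_alg2 a S d X Y X' Y' e : a * d + 2 * e = 0 -> X' * Y' = exp e * (X * Y) ->
  exp (a * (S + d)) * X' ^ 2 * Y' ^ 2 = exp (a * S) * X ^ 2 * Y ^ 2.
Proof.
  intros H H2.
  replace (exp (a * (S + d)) * X' ^ 2 * Y' ^ 2) with (exp (a * (S + d)) * 1 * (X' * Y') ^ 2) by ring.
  rewrite H2, fin_alg by auto. ring.
Qed.

Lemma zL_upd L W (z : nat -> C) m (b : bool) : 0 < L ->
  (fun j : nat => Cdiv (sigma_m m (if b then ((0, W) : C) else RtoC L) z j) (RtoC L)) =
  upd (fun j : nat => Cdiv (z j) (RtoC L)) m (dd b (tauLW L W)).
Proof.
  intros HL. apply functional_extensionality; intros j. unfold sigma_m, upd.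
  destruct (j =? m); auto. destruct b; unfold dd, tauLW, Cdiv, Cinv; apply injective_projections; simpl; field; lra.
Qed.

Lemma sumIm N m w z : (m < N)%nat ->
  sumR N (fun j => Im (sigma_m m w z j) ^ 2) = sumR N (fun j => Im (z j) ^ 2) + ((Im (z m) + Im w) ^ 2 - Im (z m) ^ 2).
Proof.
  intros Hm.
  rewrite (sumR_ext N _ (fun j => if j =? m then (Im (z j) + Im w) ^ 2 else Im (z j) ^ 2)).
  rewrite sumR_upd. destruct (Nat.ltb_spec m N); try lia. auto.
  intros j _. unfold sigma_m. destruct (j =? m); auto.
Qed.

Lemma snd_zL L x : 0 < L -> snd (Cdiv x (RtoC L)) = snd x / L.
Proof. intros. unfold Cdiv, Cinv; simpl. field. lra. Qed.

Lemma main_b L W Rs N (z : nat -> C) m (b : bool) : 0 < L -> 0 < W -> (m < N)%nat ->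
  Qfun Rs N L W (sigma_m m (if b then ((0, W) : C) else RtoC L) z) = Qfun Rs N L W z.
Proof.
  intros HL HW Hm. unfold Qfun. cbv zeta.
  rewrite zL_upd, sumIm by auto.
  assert (Ht : 0 < snd (tauLW L W)) by (simpl; apply Rdiv_lt_0_compat; auto).
  assert (Hcond : forall c : R,
    - (2 * PI * c) / (L * W) * ((Im (z m) + Im (if b then ((0, W) : C) else RtoC L)) ^ 2 - Im (z m) ^ 2) +
    2 * (c * (B2R b * (PI * snd (tauLW L W) + 2 * PI * snd ((fun j => Cdiv (z j) (RtoC L)) m)))) = 0).
  { intros c. cbv beta. rewrite snd_zL by auto. unfold Im. destruct b; simpl; field; lra. }
  destruct Rs; cbv iota.
  - apply fin_alg2 with (e := INR N * (B2R b * (PI * snd (tauLW L W) + 2 * PI * snd ((fun j => Cdiv (z j) (RtoC L)) m)))).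
    apply (Hcond (INR N)). apply WA_sh; auto.
  all: rewrite Wden_sh by (auto || discriminate); apply fin_alg; apply Hcond.
Qed.

Theorem proposition2p2 :
  forall (L W : R), 0 < L -> 0 < W ->
  forall (Rs : RootSys) (N : nat) (z : nat -> C) (m : nat), (m < N)%nat ->
    Qfun Rs N L W (sigma_m m (RtoC L) z) = Qfun Rs N L W z /\
    Qfun Rs N L W (sigma_m m ((0, W) : C) z) = Qfun Rs N L W z.
Proof.
  intros L W HL HW Rs N z m Hm. split.
  - exact (main_b L W Rs N z m false HL HW Hm).
  - exact (main_b L W Rs N z m true HL HW Hm).
Qed.
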